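(* Let $Q$ be a restriction quantal frame and let $\mathsf{C}(Q)$ be the set of completely prime filters of $Q$. For $A,B\in\mathsf{C}(Q)$ define $\mathbf{d}(A)=(A^{\ast})^{\uparrow}$, $\mathbf{r}(A)=(A^{+})^{\uparrow}$, and, when $\mathbf{d}(A)=\mathbf{r}(B)$ (equivalently $A^{\ast}=B^{+}$), $A\cdot B=(AB)^{\uparrow}$, otherwise undefined. Then $A\cdot B$ is always a completely prime filter when defined, and $(\mathsf{C}(Q),\cdot)$ is a category whose identities are exactly the identity completely prime filters, with $\mathbf{d}(A)$ and $\mathbf{r}(A)$ the right and left identities of $A$.
   Context: A restriction quantal frame is a frame $(Q,\le)$ with associative multiplication distributing over arbitrary joins on both sides, which is a monoid with identity $e$ and carries join-preserving unary operations $a\mapsto a^{\ast}$, $a\mapsto a^{+}$ with values in the set $e^{\downarrow}=\{x:x\le e\}$ of projections (a commutative subsemigroup of idempotents), fixing projections, with $aa^{\ast}=a$, $a^{+}a=a$, $(ab)^{\ast}=(a^{\ast}b)^{\ast}$, $(ab)^{+}=(ab^{+})^{+}$; the top element is a join of partial isometries ($a$ with $b\le a\Rightarrow b=b^{+}a=ab^{\ast}$) and partial isometries are closed under product. A completely prime filter is a nonempty upward closed subset closed under binary meets, not containing $0$, such that whenever $\bigvee_i a_i$ lies in it some $a_i$ does; it is an identity completely prime filter if it contains a projection. Notation: $A^{\ast}=\{a^{\ast}:a\in A\}$, $A^{+}=\{a^{+}:a\in A\}$, $AB=\{ab:a\in A,b\in B\}$, $X^{\uparrow}=\{y:\exists x\in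 X,\ x\le y\}$. *)

(* Defs.v *)
Set Implicit Arguments.

Definition img {T U : Type} (f : T -> U) (S : T -> Prop) : U -> Prop :=
  fun y => exists s, S s /\ y = f s.

Record RQF := {
  car :> Type;
  le : car -> car -> Prop;
  join : (car -> Prop) -> car;
  meet : car -> car -> car;
  mul : car -> car -> car;
  e : car;
  star : car -> car;
  plus : car -> car;
  le_refl : forall a, le a a;
  le_trans : forall a b c, le a b -> le b c -> le a c;
  le_antisym : forall a b, le a b -> le b a -> a = b;
  join_ub : forall S a, S a -> le a (join S);
  join_least : forall S b, (forall a, S a -> le a b) -> le (join S) b;
  meet_lb1 : forall a b, le (meet a b) a;
  meet_lb2 : forall a b, le (meet a b) b;
  meet_greatest : forall a b c, le c a -> le c b -> le c (meet a b);
  meet_join_distr : forall a S, meet a (join S) = join (img (meet a) S);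
  mulA : forall a b c, mul a (mul b c) = mul (mul a b) c;
  mul_join_l : forall a S, mul a (join S) = join (img (mul a) S);
  mul_join_r : forall a S, mul (join S) a = join (img (fun s => mul s a) S);
  mul_e_l : forall a, mul e a = a;
  mul_e_r : forall a, mul a e = a;
  proj_mul_closed : forall a b, le a e -> le b e -> le (mul a b) e;
  proj_comm : forall a b, le a e -> le b e -> mul a b = mul b a;
  proj_idem : forall a, le a e -> mul a a = a;
  star_join : forall S, star (join S) = join (img star S);
  plus_join : forall S, plus (join S) = join (img plus S);
  star_proj : forall a, le (star a) e;
  plus_proj : forall a, le (plus a) e;
  star_fix : forall a, le a e -> star a = a;
  plus_fix : forall a, le a e -> plus a = a;
  mul_star : forall a, mul a (star a) = a;
  plus_mul : forall a, mul (plus a) a = a;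
  star_mul : forall a b, star (mul a b) = star (mul (star a) b);
  plus_mul2 : forall a b, plus (mul a b) = plus (mul a (plus b));
  (* partial isometries *)
  top_pi : join (fun _ => True) =
           join (fun a => forall b, le b a -> b = mul (plus b) a /\ b = mul a (star b));
  pi_mul : forall a b,
     (forall c, le c a -> c = mul (plus c) a /\ c = mul a (star c)) ->
     (forall c, le c b -> c = mul (plus c) b /\ c = mul b (star c)) ->
     (forall c, le c (mul a b) -> c = mul (plus c) (mul a b) /\ c = mul (mul a b) (star c))
}.

Arguments le {r}. Arguments join {r}. Arguments meet {r}. Arguments mul {r}.
Arguments star {r}. Arguments plus {r}.

Section Filters.
Variable Q : RQF.

Definition bot : Q := join (fun _ : Q => False).

Definition cpf (F : Q -> Prop) : Prop :=
  (exists a, F a) /\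
  (forall a b, F a -> le a b -> F b) /\
  (forall a b, F a -> F b -> F (meet a b)) /\
  ~ F bot /\
  (forall S, F (join S) -> exists a, S a /\ F a).

Definition identity_cpf (F : Q -> Prop) : Prop := cpf F /\ exists a, F a /\ le a (e Q).

Definition upc (X : Q -> Prop) : Q -> Prop := fun y => exists x, X x /\ le x y.

Definition dom (A : Q -> Prop) : Q -> Prop := upc (img (@star Q) A).
Definition ran (A : Q -> Prop) : Q -> Prop := upc (img (@plus Q) A).

(* the product (AB)^up; only meaningful when dom A = ran B *)
Definition fprod (A B : Q -> Prop) : Q -> Prop :=
  upc (fun y => exists a b, A a /\ B b /\ y = mul a b).
End Filters.
Arguments bot {Q}. Arguments cpf {Q}. Arguments identity_cpf {Q}. Arguments upc {Q}.
Arguments dom {Q}. Arguments ran {Q}. Arguments fprod {Q}.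

(* E is an identity arrow of the partial category (C(Q), .) where
   A.B is defined iff dom A = ran B *)
Definition cat_identity {Q : RQF} (E : Q -> Prop) : Prop :=
  cpf E /\ dom E = E /\ ran E = E /\
  (forall X, cpf X -> dom X = ran E -> fprod X E = X) /\
  (forall X, cpf X -> dom E = ran X -> fprod E X = X).

(* Main.v *)
Require Import Defs.
From Stdlib Require Import FunctionalExtensionality PropExtensionality.

Definition PI {Q : RQF} (x : Q) : Prop :=
  forall b, le b x -> b = mul (plus b) x /\ b = mul x (star b).

Lemma pred_ext {T : Type} (P R : T -> Prop) : (forall x, P x <-> R x) -> P = R.
Proof.
  intro H. apply functional_extensionality; intro x.
  apply propositional_extensionality. apply H.
Qed.

Lemma pair_join {Q : RQF} {a b : Q} : le a b -> join (fun x => x = a \/ x = b) = b.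
Proof.
  intro H. apply le_antisym.
  - apply join_least. intros x [-> | ->]; [exact H | apply le_refl].
  - apply join_ub. right; reflexivity.
Qed.

Lemma mul_mono_r {Q : RQF} (c : Q) {a b : Q} : le a b -> le (mul c a) (mul c b).
Proof.
  intro H. rewrite <- (pair_join H). rewrite mul_join_l.
  apply join_ub. exists a. split; [left; reflexivity | reflexivity].
Qed.

Lemma mul_mono_l {Q : RQF} (c : Q) {a b : Q} : le a b -> le (mul a c) (mul b c).
Proof.
  intro H. rewrite <- (pair_join H). rewrite mul_join_r.
  apply join_ub. exists a. split; [left; reflexivity | reflexivity].
Qed.

Lemma mul_mono {Q : RQF} {a b c d : Q} : le a b -> le c d -> le (mul a c) (mul b d).
Proof.
  intros H1 H2. eapply le_trans; [apply (mul_mono_l c H1) | apply (mul_mono_r b H2)].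
Qed.

Lemma star_mono {Q : RQF} {a b : Q} : le a b -> le (star a) (star b).
Proof.
  intro H. rewrite <- (pair_join H). rewrite star_join.
  apply join_ub. exists a. split; [left; reflexivity | reflexivity].
Qed.

Lemma plus_mono {Q : RQF} {a b : Q} : le a b -> le (plus a) (plus b).
Proof.
  intro H. rewrite <- (pair_join H). rewrite plus_join.
  apply join_ub. exists a. split; [left; reflexivity | reflexivity].
Qed.

Lemma le_bot {Q : RQF} (x : Q) : le bot x.
Proof. unfold bot. apply join_least. intros a []. Qed.

Lemma le_bot_eq {Q : RQF} {x : Q} : le x bot -> x = bot.
Proof. intro H. apply le_antisym; [exact H | apply le_bot]. Qed.

Lemma star_bot {Q : RQF} : star (@bot Q) = bot.
Proof.
  apply le_bot_eq. unfold bot at 1. rewrite star_join.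
  apply join_least. intros a [s [[] _]].
Qed.

Lemma mul_bot_r {Q : RQF} (a : Q) : mul a bot = bot.
Proof.
  apply le_bot_eq. unfold bot at 1. rewrite mul_join_l.
  apply join_least. intros x [s [[] _]].
Qed.

Lemma mul_bot_l {Q : RQF} (a : Q) : mul bot a = bot.
Proof.
  apply le_bot_eq. unfold bot at 1. rewrite mul_join_r.
  apply join_least. intros x [s [[] _]].
Qed.

Lemma star_eq_bot {Q : RQF} {x : Q} : star x = bot -> x = bot.
Proof. intro H. rewrite <- (mul_star _ x). rewrite H. apply mul_bot_r. Qed.

Lemma proj_le_mul {Q : RQF} {f g : Q} : le f (e Q) -> le g (e Q) -> le f g -> mul f g = f.
Proof.
  intros Hf Hg H. apply le_antisym.
  - eapply le_trans; [apply (mul_mono_r f Hg) | rewrite mul_e_r; apply le_refl].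
  - rewrite <- (proj_idem _ f Hf) at 1. apply mul_mono_r, H.
Qed.

Lemma mul_proj_le_r {Q : RQF} (x : Q) {f : Q} : le f (e Q) -> le (mul x f) x.
Proof. intro H. eapply le_trans; [apply (mul_mono_r x H) | rewrite mul_e_r; apply le_refl]. Qed.

Lemma mul_proj_le_l {Q : RQF} (x : Q) {f : Q} : le f (e Q) -> le (mul f x) x.
Proof. intro H. eapply le_trans; [apply (mul_mono_l x H) | rewrite mul_e_l; apply le_refl]. Qed.

Lemma star_mul_proj {Q : RQF} (a : Q) {f : Q} : le f (e Q) -> star (mul a f) = mul (star a) f.
Proof. intro H. rewrite star_mul. apply star_fix, proj_mul_closed; [apply star_proj | exact H]. Qed.

Lemma plus_mul_proj {Q : RQF} (a : Q) {f : Q} : le f (e Q) -> plus (mul f a) = mul f (plus a).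
Proof. intro H. rewrite plus_mul2. apply plus_fix, proj_mul_closed; [exact H | apply plus_proj]. Qed.

Lemma absorb_l {Q : RQF} {f x : Q} : le f (e Q) -> le (plus x) f -> mul f x = x.
Proof.
  intros Hf H. rewrite <- (plus_mul _ x) at 1. rewrite mulA.
  rewrite (proj_comm _ f (plus x) Hf (plus_proj _ x)).
  rewrite (proj_le_mul (plus_proj _ x) Hf H). apply plus_mul.
Qed.

Lemma absorb_r {Q : RQF} {f x : Q} : le f (e Q) -> le (star x) f -> mul x f = x.
Proof.
  intros Hf H. rewrite <- (mul_star _ x) at 1. rewrite <- mulA.
  rewrite (proj_le_mul (star_proj _ x) Hf H). apply mul_star.
Qed.

Lemma PI_down {Q : RQF} {s t : Q} : PI s -> le t s -> PI t.
Proof.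
  intros Hs Hts c Hct.
  assert (Hcs : le c s) by (eapply le_trans; eauto).
  destruct (Hs c Hcs) as [E1 E2]. destruct (Hs t Hts) as [T1 T2].
  split.
  - rewrite T1, mulA.
    rewrite (proj_le_mul (plus_proj _ c) (plus_proj _ t) (plus_mono Hct)). exact E1.
  - rewrite T2, <- mulA.
    rewrite (proj_comm _ (star t) (star c) (star_proj _ t) (star_proj _ c)).
    rewrite (proj_le_mul (star_proj _ c) (star_proj _ t) (star_mono Hct)). exact E2.
Qed.

Section F.
Lemma cpf_ne {Q : RQF} {A : Q -> Prop} : cpf A -> exists a, A a.
Proof. intros [H _]; exact H. Qed.
Lemma cpf_up {Q : RQF} {A : Q -> Prop} {a b : Q} : cpf A -> A a -> le a b -> A b.
Proof. intros [_ [H _]]; apply H. Qed.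
Lemma cpf_meet {Q : RQF} {A : Q -> Prop} {a b : Q} : cpf A -> A a -> A b -> A (meet a b).
Proof. intros [_ [_ [H _]]]; apply H. Qed.
Lemma cpf_nbot {Q : RQF} {A : Q -> Prop} : cpf A -> ~ A bot.
Proof. intros [_ [_ [_ [H _]]]]; apply H. Qed.
Lemma cpf_cp {Q : RQF} {A : Q -> Prop} {S : Q -> Prop} : cpf A -> A (join S) -> exists a, S a /\ A a.
Proof. intros [_ [_ [_ [_ H]]]]; apply H. Qed.
End F.

Lemma cpf_PI {Q : RQF} {A : Q -> Prop} {a : Q} : cpf A -> A a -> exists p, A p /\ PI p /\ le p a.
Proof.
  intros HA Ha.
  assert (Htop : le a (join (fun _ : Q => True))) by (apply join_ub; exact I).
  rewrite top_pi in Htop.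
  assert (Heq : a = join (img (meet a) PI)).
  { rewrite <- meet_join_distr. apply le_antisym.
    - apply meet_greatest; [apply le_refl | exact Htop].
    - apply meet_lb1. }
  rewrite Heq in Ha. destruct (cpf_cp HA Ha) as [t [[p [Hp ->]] Ht]].
  exists (meet a p). split; [exact Ht | split].
  - exact (PI_down Hp (meet_lb2 _ a p)).
  - apply meet_lb1.
Qed.

Lemma dom_cpf {Q : RQF} (A : Q -> Prop) : cpf A -> cpf (dom A).
Proof.
  intros HA. destruct (cpf_ne HA) as [a0 Ha0].
  unfold cpf, dom, upc, img.
  split; [|split; [|split; [|split]]].
  - exists (star a0), (star a0). split; [exists a0; split; [exact Ha0 | reflexivity] | apply le_refl].
  - intros x y [z [Hz Hzx]] Hxy. exists z. split; [exact Hz | eapply le_trans; eauto].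
  - intros x y [u [[a [Ha ->]] Hux]] [v [[b [Hb ->]] Hvy]].
    exists (star (meet a b)). split.
    + exists (meet a b); split; [apply (cpf_meet HA Ha Hb) | reflexivity].
    + apply meet_greatest.
      * eapply le_trans; [eapply star_mono; apply meet_lb1 | exact Hux].
      * eapply le_trans; [eapply star_mono; apply meet_lb2 | exact Hvy].
  - intros [u [[a [Ha ->]] Hb]]. apply (cpf_nbot HA).
    apply le_bot_eq in Hb. apply star_eq_bot in Hb. rewrite <- Hb; exact Ha.
  - intros S [u [[a [Ha ->]] Hu]].
    assert (Hg : meet (star a) (join S) = star a).
    { apply le_antisym; [apply meet_lb1 | apply meet_greatest; [apply le_refl | exact Hu]]. }
    assert (Heq : a = join (img (mul a) (img (meet (star a)) S))).
    { rewrite <- mul_join_l, <- meet_join_distr, Hg. symmetry; apply mul_star. }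
    rewrite Heq in Ha.
    destruct (cpf_cp HA Ha) as [t [[w [[s [Hs ->]] ->]] Ht]].
    exists s. split; [exact Hs |].
    exists (star (mul a (meet (star a) s))). split.
    + exists (mul a (meet (star a) s)); split; [exact Ht | reflexivity].
    + assert (Hme : le (meet (star a) s) (e Q)) by (eapply le_trans; [apply meet_lb1 | apply star_proj]).
      rewrite (star_mul_proj a Hme).
      eapply le_trans; [apply mul_proj_le_l, star_proj | apply meet_lb2].
Qed.

Lemma ran_cpf {Q : RQF} (A : Q -> Prop) : cpf A -> cpf (ran A).
Proof.
  intros HA. destruct (cpf_ne HA) as [a0 Ha0].
  unfold cpf, ran, upc, img.
  split; [|split; [|split; [|split]]].
  - exists (plus a0), (plus a0). split; [exists a0; split; [exact Ha0 | reflexivity] | apply le_refl].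
  - intros x y [z [Hz Hzx]] Hxy. exists z. split; [exact Hz | eapply le_trans; eauto].
  - intros x y [u [[a [Ha ->]] Hux]] [v [[b [Hb ->]] Hvy]].
    exists (plus (meet a b)). split.
    + exists (meet a b); split; [apply (cpf_meet HA Ha Hb) | reflexivity].
    + apply meet_greatest.
      * eapply le_trans; [eapply plus_mono; apply meet_lb1 | exact Hux].
      * eapply le_trans; [eapply plus_mono; apply meet_lb2 | exact Hvy].
  - intros [u [[a [Ha ->]] Hb]]. apply (cpf_nbot HA).
    apply le_bot_eq in Hb.
    assert (a = bot) as E by (rewrite <- (plus_mul _ a), Hb; apply mul_bot_l).
    rewrite <- E; exact Ha.
  - intros S [u [[a [Ha ->]] Hu]].
    assert (Hg : meet (plus a) (join S) = plus a).
    { apply le_antisym; [apply meet_lb1 | apply meet_greatest; [apply le_refl | exact Hu]]. }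
    assert (Heq : a = join (img (fun s => mul s a) (img (meet (plus a)) S))).
    { rewrite <- mul_join_r, <- meet_join_distr, Hg. symmetry; apply plus_mul. }
    rewrite Heq in Ha.
    destruct (cpf_cp HA Ha) as [t [[w [[s [Hs ->]] ->]] Ht]].
    exists s. split; [exact Hs |].
    exists (plus (mul (meet (plus a) s) a)). split.
    + exists (mul (meet (plus a) s) a); split; [exact Ht | reflexivity].
    + assert (Hme : le (meet (plus a) s) (e Q)) by (eapply le_trans; [apply meet_lb1 | apply plus_proj]).
      rewrite (plus_mul_proj a Hme).
      eapply le_trans; [apply mul_proj_le_r, plus_proj | apply meet_lb2].
Qed.

Lemma L1 {Q : RQF} {A B : Q -> Prop} {a b : Q} : cpf A -> cpf B -> dom A = ran B -> A a -> B b ->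
  exists b2, B b2 /\ le b2 b /\ le (plus b2) (star a).
Proof.
  intros HA HB HAB Ha Hb.
  assert (H : dom A (star a)).
  { exists (star a); split; [exists a; split; [exact Ha | reflexivity] | apply le_refl]. }
  rewrite HAB in H. destruct H as [x [[b1 [Hb1 ->]] Hx]].
  exists (meet b b1). split; [apply (cpf_meet HB Hb Hb1) | split; [apply meet_lb1 |]].
  eapply le_trans; [eapply plus_mono; apply meet_lb2 | exact Hx].
Qed.

Lemma L2 {Q : RQF} {A B : Q -> Prop} {a b : Q} : cpf A -> cpf B -> dom A = ran B -> A a -> B b ->
  exists a2, A a2 /\ le a2 a /\ le (star a2) (plus b).
Proof.
  intros HA HB HAB Ha Hb.
  assert (H : ran B (plus b)).
  { exists (plus b); split; [exists b; split; [exact Hb | reflexivity] | apply le_refl]. }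
  rewrite <- HAB in H. destruct H as [x [[a1 [Ha1 ->]] Hx]].
  exists (meet a a1). split; [apply (cpf_meet HA Ha Ha1) | split; [apply meet_lb1 |]].
  eapply le_trans; [eapply star_mono; apply meet_lb2 | exact Hx].
Qed.

Lemma starL1 {Q : RQF} {a b : Q} : le (plus b) (star a) -> star (mul a b) = star b.
Proof. intro H. rewrite star_mul, (absorb_l (star_proj _ a) H). reflexivity. Qed.

Lemma plusL2 {Q : RQF} {a b : Q} : le (star a) (plus b) -> plus (mul a b) = plus a.
Proof. intro H. rewrite plus_mul2, (absorb_r (plus_proj _ b) H). reflexivity. Qed.

Lemma fprod_cpf {Q : RQF} (A B : Q -> Prop) : cpf A -> cpf B -> dom A = ran B -> cpf (fprod A B).
Proof.
  intros HA HB HAB.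
  destruct (cpf_ne HA) as [a0 Ha0]. destruct (cpf_ne HB) as [b0 Hb0].
  unfold cpf, fprod, upc.
  split; [|split; [|split; [|split]]].
  - exists (mul a0 b0), (mul a0 b0).
    split; [exists a0, b0; split; [exact Ha0 | split; [exact Hb0 | reflexivity]] | apply le_refl].
  - intros x y [z [Hz Hzx]] Hxy. exists z. split; [exact Hz | eapply le_trans; eauto].
  - intros x y [u [[a1 [b1 [Ha1 [Hb1 ->]]]] Hu]] [v [[a2 [b2 [Ha2 [Hb2 ->]]]] Hv]].
    exists (mul (meet a1 a2) (meet b1 b2)). split.
    + exists (meet a1 a2), (meet b1 b2).
      split; [apply (cpf_meet HA Ha1 Ha2) | split; [apply (cpf_meet HB Hb1 Hb2) | reflexivity]].
    + apply meet_greatest.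
      * eapply le_trans; [eapply mul_mono; apply meet_lb1 | exact Hu].
      * eapply le_trans; [eapply mul_mono; apply meet_lb2 | exact Hv].
  - intros [u [[a [b [Ha [Hb ->]]]] Hu]].
    destruct (L1 HA HB HAB Ha Hb) as [b2 [Hb2 [Hle Hpl]]].
    assert (Hz : mul a b2 = bot) by (apply le_bot_eq; eapply le_trans; [apply (mul_mono_r a Hle) | exact Hu]).
    assert (Hs : star b2 = bot) by (rewrite <- (starL1 Hpl), Hz; apply star_bot).
    apply star_eq_bot in Hs. apply (cpf_nbot HB). rewrite <- Hs. exact Hb2.
  - intros S [u [[a [b [Ha [Hb ->]]]] Hu]].
    destruct (cpf_PI HA Ha) as [a1 [Ha1 [Pa1 Ha1a]]].
    destruct (cpf_PI HB Hb) as [b1 [Hb1 [Pb1 Hb1b]]].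
    destruct (L1 HA HB HAB Ha1 Hb1) as [b2 [Hb2 [Hb21 Hpl]]].
    assert (Pb2 : PI b2) by exact (PI_down Pb1 Hb21).
    assert (Px : PI (mul a1 b2)) by exact (pi_mul _ _ _ Pa1 Pb2).
    assert (Hxs : le (mul a1 b2) (join S)).
    { eapply le_trans; [eapply mul_mono; [exact Ha1a | eapply le_trans; [exact Hb21 | exact Hb1b]] | exact Hu]. }
    assert (Hsx : star (mul a1 b2) = star b2) by exact (starL1 Hpl).
    assert (Hm : meet (mul a1 b2) (join S) = mul a1 b2).
    { apply le_antisym; [apply meet_lb1 | apply meet_greatest; [apply le_refl | exact Hxs]]. }
    assert (Heq : b2 = join (img (mul b2) (img star (img (meet (mul a1 b2)) S)))).
    { rewrite <- mul_join_l, <- star_join, <- meet_join_distr, Hm, Hsx. symmetry; apply mul_star. }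
    rewrite Heq in Hb2.
    destruct (cpf_cp HB Hb2) as [t [[w [[c [[s [Hs ->]] ->]] ->]] Ht]].
    exists s. split; [exact Hs |].
    exists (mul a1 (mul b2 (star (meet (mul a1 b2) s)))). split.
    + exists a1, (mul b2 (star (meet (mul a1 b2) s))).
      split; [exact Ha1 | split; [exact Ht | reflexivity]].
    + rewrite mulA.
      destruct (Px (meet (mul a1 b2) s) (meet_lb1 _ _ _)) as [_ E2].
      rewrite <- E2. apply meet_lb2.
Qed.

Lemma dom_fprod {Q : RQF} (A B : Q -> Prop) : cpf A -> cpf B -> dom A = ran B -> dom (fprod A B) = dom B.
Proof.
  intros HA HB HAB. apply pred_ext; intro y.
  split.
  - intros [u [[x [[v [[a [b [Ha [Hb ->]]]] Hv]] ->]] Hu]].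
    destruct (L1 HA HB HAB Ha Hb) as [b2 [Hb2 [Hle Hpl]]].
    exists (star b2). split; [exists b2; split; [exact Hb2 | reflexivity] |].
    rewrite <- (starL1 Hpl). eapply le_trans; [|exact Hu].
    apply star_mono. eapply le_trans; [apply (mul_mono_r a Hle) | exact Hv].
  - intros [u [[b [Hb ->]] Hu]].
    destruct (cpf_ne HA) as [a0 Ha0].
    destruct (L1 HA HB HAB Ha0 Hb) as [b2 [Hb2 [Hle Hpl]]].
    exists (star (mul a0 b2)). split.
    + exists (mul a0 b2). split; [| reflexivity].
      exists (mul a0 b2). split; [exists a0, b2; split; [exact Ha0 | split; [exact Hb2 | reflexivity]] | apply le_refl].
    + rewrite (starL1 Hpl). eapply le_trans; [exact (star_mono Hle) | exact Hu].
Qed.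

Lemma ran_fprod {Q : RQF} (A B : Q -> Prop) : cpf A -> cpf B -> dom A = ran B -> ran (fprod A B) = ran A.
Proof.
  intros HA HB HAB. apply pred_ext; intro y.
  split.
  - intros [u [[x [[v [[a [b [Ha [Hb ->]]]] Hv]] ->]] Hu]].
    destruct (L2 HA HB HAB Ha Hb) as [a2 [Ha2 [Hle Hpl]]].
    exists (plus a2). split; [exists a2; split; [exact Ha2 | reflexivity] |].
    rewrite <- (plusL2 Hpl). eapply le_trans; [|exact Hu].
    apply plus_mono. eapply le_trans; [apply (mul_mono_l b Hle) | exact Hv].
  - intros [u [[a [Ha ->]] Hu]].
    destruct (cpf_ne HB) as [b0 Hb0].
    destruct (L2 HA HB HAB Ha Hb0) as [a2 [Ha2 [Hle Hpl]]].
    exists (plus (mul a2 b0)). split.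
    + exists (mul a2 b0). split; [| reflexivity].
      exists (mul a2 b0). split; [exists a2, b0; split; [exact Ha2 | split; [exact Hb0 | reflexivity]] | apply le_refl].
    + rewrite (plusL2 Hpl). eapply le_trans; [exact (plus_mono Hle) | exact Hu].
Qed.

Lemma fprod_assoc {Q : RQF} (A B C : Q -> Prop) : fprod (fprod A B) C = fprod A (fprod B C).
Proof.
  apply pred_ext; intro y; split.
  - intros [x [[u [c [[w [[a [b [Ha [Hb ->]]]] Hw]] [Hc ->]]]] Hx]].
    exists (mul a (mul b c)). split.
    + exists a, (mul b c). split; [exact Ha | split; [| reflexivity]].
      exists (mul b c). split; [exists b, c; split; [exact Hb | split; [exact Hc | reflexivity]] | apply le_refl].
    + rewrite mulA. eapply le_trans; [apply (mul_mono_l c Hw) | exact Hx].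
  - intros [x [[a [v [Ha [[w [[b [c [Hb [Hc ->]]]] Hw]] ->]]]] Hx]].
    exists (mul (mul a b) c). split.
    + exists (mul a b), c. split; [| split; [exact Hc | reflexivity]].
      exists (mul a b). split; [exists a, b; split; [exact Ha | split; [exact Hb | reflexivity]] | apply le_refl].
    + rewrite <- mulA. eapply le_trans; [apply (mul_mono_r a Hw) | exact Hx].
Qed.

Lemma fprod_dom {Q : RQF} (X : Q -> Prop) : cpf X -> fprod X (dom X) = X.
Proof.
  intro HX. apply pred_ext; intro y; split.
  - intros [u [[x [d [Hx [[v [[x' [Hx' ->]] Hv]] ->]]]] Hu]].
    apply (cpf_up HX (cpf_meet HX Hx Hx')).
    rewrite <- (mul_star _ (meet x x')). eapply le_trans; [| exact Hu].
    eapply mul_mono; [apply meet_lb1 | eapply le_trans; [eapply star_mono; apply meet_lb2 | exact Hv]].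
  - intro Hy. exists (mul y (star y)). split.
    + exists y, (star y). split; [exact Hy | split; [| reflexivity]].
      exists (star y). split; [exists y; split; [exact Hy | reflexivity] | apply le_refl].
    + rewrite mul_star. apply le_refl.
Qed.

Lemma fprod_ran {Q : RQF} (X : Q -> Prop) : cpf X -> fprod (ran X) X = X.
Proof.
  intro HX. apply pred_ext; intro y; split.
  - intros [u [[d [x [[v [[x' [Hx' ->]] Hv]] [Hx ->]]]] Hu]].
    apply (cpf_up HX (cpf_meet HX Hx Hx')).
    rewrite <- (plus_mul _ (meet x x')). eapply le_trans; [| exact Hu].
    eapply mul_mono; [eapply le_trans; [eapply plus_mono; apply meet_lb2 | exact Hv] | apply meet_lb1].
  - intro Hy. exists (mul (plus y) y). split.
    + exists (plus y), y. split; [| split; [exact Hy | reflexivity]].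
      exists (plus y). split; [exists y; split; [exact Hy | reflexivity] | apply le_refl].
    + rewrite plus_mul. apply le_refl.
Qed.

Lemma dom_dom {Q : RQF} (A : Q -> Prop) : dom (dom A) = dom A.
Proof.
  apply pred_ext; intro y; split.
  - intros [u [[x [[v [[a [Ha ->]] Hv]] ->]] Hu]].
    exists (star a). split; [exists a; split; [exact Ha | reflexivity] |].
    eapply le_trans; [| exact Hu]. rewrite <- (star_fix _ (star a) (star_proj _ a)) at 1.
    exact (star_mono Hv).
  - intros [u [[a [Ha ->]] Hu]].
    exists (star (star a)). split.
    + exists (star a). split; [| reflexivity].
      exists (star a). split; [exists a; split; [exact Ha | reflexivity] | apply le_refl].
    + rewrite (star_fix _ (star a) (star_proj _ a)). exact Hu.
Qed.

Lemma ran_dom {Q : RQF} (A : Q -> Prop) : ran (dom A) = dom A.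
Proof.
  apply pred_ext; intro y; split.
  - intros [u [[x [[v [[a [Ha ->]] Hv]] ->]] Hu]].
    exists (star a). split; [exists a; split; [exact Ha | reflexivity] |].
    eapply le_trans; [| exact Hu]. rewrite <- (plus_fix _ (star a) (star_proj _ a)) at 1.
    exact (plus_mono Hv).
  - intros [u [[a [Ha ->]] Hu]].
    exists (plus (star a)). split.
    + exists (star a). split; [| reflexivity].
      exists (star a). split; [exists a; split; [exact Ha | reflexivity] | apply le_refl].
    + rewrite (plus_fix _ (star a) (star_proj _ a)). exact Hu.
Qed.

Lemma dom_ran {Q : RQF} (A : Q -> Prop) : dom (ran A) = ran A.
Proof.
  apply pred_ext; intro y; split.
  - intros [u [[x [[v [[a [Ha ->]] Hv]] ->]] Hu]].
    exists (plus a). split; [exists a; split; [exact Ha | reflexivity] |].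
    eapply le_trans; [| exact Hu]. rewrite <- (star_fix _ (plus a) (plus_proj _ a)) at 1.
    exact (star_mono Hv).
  - intros [u [[a [Ha ->]] Hu]].
    exists (star (plus a)). split.
    + exists (plus a). split; [| reflexivity].
      exists (plus a). split; [exists a; split; [exact Ha | reflexivity] | apply le_refl].
    + rewrite (star_fix _ (plus a) (plus_proj _ a)). exact Hu.
Qed.

Lemma ran_ran {Q : RQF} (A : Q -> Prop) : ran (ran A) = ran A.
Proof.
  apply pred_ext; intro y; split.
  - intros [u [[x [[v [[a [Ha ->]] Hv]] ->]] Hu]].
    exists (plus a). split; [exists a; split; [exact Ha | reflexivity] |].
    eapply le_trans; [| exact Hu]. rewrite <- (plus_fix _ (plus a) (plus_proj _ a)) at 1.
    exact (plus_mono Hv).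
  - intros [u [[a [Ha ->]] Hu]].
    exists (plus (plus a)). split.
    + exists (plus a). split; [| reflexivity].
      exists (plus a). split; [exists a; split; [exact Ha | reflexivity] | apply le_refl].
    + rewrite (plus_fix _ (plus a) (plus_proj _ a)). exact Hu.
Qed.

Lemma cat_id_of {Q : RQF} (E : Q -> Prop) : cpf E -> dom E = E -> ran E = E -> cat_identity E.
Proof.
  intros HE Hd Hr. unfold cat_identity.
  split; [exact HE | split; [exact Hd | split; [exact Hr | split]]].
  - intros X HX H. rewrite Hr in H. rewrite <- H. apply fprod_dom, HX.
  - intros X HX H. rewrite Hd in H. rewrite H. apply fprod_ran, HX.
Qed.

Lemma dom_id {Q : RQF} (E : Q -> Prop) f : cpf E -> E f -> le f (e Q) -> dom E = E.
Proof.
  intros HE Hf Hfe. apply pred_ext; intro y; split.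
  - intros [u [[x [Hx ->]] Hu]]. apply (cpf_up HE (cpf_meet HE Hx Hf)).
    eapply le_trans; [| exact Hu].
    assert (Hz : le (meet x f) (e Q)) by (eapply le_trans; [apply meet_lb2 | exact Hfe]).
    rewrite <- (star_fix _ (meet x f) Hz) at 1. eapply star_mono; apply meet_lb1.
  - intro Hy. exists (meet y f). split; [| apply meet_lb1].
    exists (meet y f). split; [exact (cpf_meet HE Hy Hf) |].
    symmetry; apply star_fix. eapply le_trans; [apply meet_lb2 | exact Hfe].
Qed.

Lemma ran_id {Q : RQF} (E : Q -> Prop) f : cpf E -> E f -> le f (e Q) -> ran E = E.
Proof.
  intros HE Hf Hfe. apply pred_ext; intro y; split.
  - intros [u [[x [Hx ->]] Hu]]. apply (cpf_up HE (cpf_meet HE Hx Hf)).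
    eapply le_trans; [| exact Hu].
    assert (Hz : le (meet x f) (e Q)) by (eapply le_trans; [apply meet_lb2 | exact Hfe]).
    rewrite <- (plus_fix _ (meet x f) Hz) at 1. eapply plus_mono; apply meet_lb1.
  - intro Hy. exists (meet y f). split; [| apply meet_lb1].
    exists (meet y f). split; [exact (cpf_meet HE Hy Hf) |].
    symmetry; apply plus_fix. eapply le_trans; [apply meet_lb2 | exact Hfe].
Qed.

Theorem mainTheorem9 (Q : RQF) :
  (* the product of composable completely prime filters is a completely prime filter *)
  (forall A B : Q -> Prop, cpf A -> cpf B -> dom A = ran B -> cpf (fprod A B)) /\
  (* d(A) and r(A) are completely prime filters, and composition matches domains/codomains *)
  (forall A : Q -> Prop, cpf A -> cpf (dom A) /\ cpf (ran A)) /\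
  (forall A B : Q -> Prop, cpf A -> cpf B -> dom A = ran B ->
     dom (fprod A B) = dom B /\ ran (fprod A B) = ran A) /\
  (* associativity *)
  (forall A B C : Q -> Prop, cpf A -> cpf B -> cpf C -> dom A = ran B -> dom B = ran C ->
     fprod (fprod A B) C = fprod A (fprod B C)) /\
  (* d(A) is a right identity and r(A) a left identity of A *)
  (forall A : Q -> Prop, cpf A ->
     cat_identity (dom A) /\ cat_identity (ran A) /\
     dom A = ran (dom A) /\ fprod A (dom A) = A /\
     dom (ran A) = ran A /\ fprod (ran A) A = A) /\
  (* the identities are exactly the identity completely prime filters *)
  (forall E : Q -> Prop, cpf E -> (cat_identity E <-> identity_cpf E)).
Proof.
  split; [intros A B HA HB HAB; apply fprod_cpf; assumption |].
  split; [intros A HA; split; [apply dom_cpf | apply ran_cpf]; assumption |].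
  split; [intros A B HA HB HAB; split; [apply dom_fprod | apply ran_fprod]; assumption |].
  split; [intros; apply fprod_assoc |].
  split.
  - intros A HA.
    split; [apply cat_id_of; [apply dom_cpf, HA | apply dom_dom | apply ran_dom] |].
    split; [apply cat_id_of; [apply ran_cpf, HA | apply dom_ran | apply ran_ran] |].
    split; [symmetry; apply ran_dom |].
    split; [apply fprod_dom, HA |].
    split; [apply dom_ran | apply fprod_ran, HA].
  - intros E HE. split.
    + intros [_ [Hd _]]. split; [exact HE |].
      destruct (cpf_ne HE) as [a Ha]. exists (star a). split; [| apply star_proj].
      rewrite <- Hd. exists (star a). split; [exists a; split; [exact Ha | reflexivity] | apply le_refl].
    + intros [_ [f [Hf Hfe]]]. apply cat_id_of; [exact HE | exact (dom_id E f HE Hf Hfe) | exact (ran_id E f HE Hf Hfe)].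
Qed.
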